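(* Let $c\in(0,1)$, $f_{\mathrm{cost}}(x)=x^c$, and $F_{\mathrm{cost}}(p)=\sum_i f_{\mathrm{cost}}(p(i))$. For any finite set $S$ of $m$ discrete probability distributions, the greedy coupling $\mathcal G_S$ satisfies $F_{\mathrm{cost}}(\mathcal G_S)\le\left(\frac12+\frac{1}{c\,2^c}\right)F_{\mathrm{cost}}(C)$ for every coupling $C$ of $S$.
   Context: A coupling of $S=\{p_1,\dots,p_m\}$ is a joint distribution with marginals $p_1,\dots,p_m$; its cost is $F_{\mathrm{cost}}$ applied to its vector of probabilities. Greedy coupling algorithm: maintain the remaining masses of the states of each distribution in $S$. Repeatedly: let $r=\min_{p\in S}\max_j p(j)$; if $r=0$ stop; otherwise append $r$ as the next state of $\mathcal G_S$ and subtract $r$ from the largest remaining state of every distribution (ties broken arbitrarily). $\mathcal G_S$ is the resulting list of state masses. *)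

(* Defs.v *)
From HB Require Import structures.
From mathcomp Require Import all_boot all_order all_algebra.
From mathcomp Require Import reals exp.
Set Implicit Arguments. Unset Strict Implicit. Unset Printing Implicit Defensive.
Import Order.TTheory GRing.Theory Num.Theory.
Local Open Scope ring_scope.

Definition is_distr (R : realType) (T : finType) (p : {ffun T -> R}) : Prop :=
  (forall t, 0 <= p t) /\ \sum_(t : T) p t = 1.

Definition is_coupling (R : realType) (T : finType) (m : nat)
    (p : 'I_m -> {ffun T -> R}) (C : {ffun {ffun 'I_m -> T} -> R}) : Prop :=
  (forall x, 0 <= C x) /\
  (forall (k : 'I_m) (t : T), \sum_(x : {ffun 'I_m -> T} | x k == t) C x = p k t).

Definition maxstate (R : realType) (T : finType) (m : nat)
    (q : 'I_m -> T -> R) (k : 'I_m) : R :=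
  \big[Num.max/0]_(t : T) q k t.

(* r = min_{k} max_j q k j  (the start value of the fold is the overall max,
   so this is the genuine minimum when m > 0, and 0 when m = 0) *)
Definition greedy_r (R : realType) (T : finType) (m : nat)
    (q : 'I_m -> T -> R) : R :=
  \big[Num.min/ \big[Num.max/0]_(k : 'I_m) maxstate q k]_(k : 'I_m) maxstate q k.

Definition greedy_update (R : realType) (T : finType) (m : nat)
    (q : 'I_m -> T -> R) (j : 'I_m -> T) (r : R) : 'I_m -> T -> R :=
  fun k t => if t == j k then q k t - r else q k t.

(* greedy_run q G : G is a possible output (list of state masses) of the greedy
   coupling algorithm started from remaining masses q, ties broken arbitrarily. *)
Inductive greedy_run (R : realType) (T : finType) (m : nat) :
    ('I_m -> T -> R) -> seq R -> Prop :=
| greedy_stop q : greedy_r q = 0 -> greedy_run q [::]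
| greedy_step q (j : 'I_m -> T) G :
    greedy_r q != 0 ->
    (forall k t, q k t <= q k (j k)) ->
    greedy_run (greedy_update q j (greedy_r q)) G ->
    greedy_run q (greedy_r q :: G).

Definition Fcost_seq (R : realType) (c : R) (s : seq R) : R :=
  \sum_(x <- s) powR x c.

Definition Fcost_coupling (R : realType) (T : finType) (m : nat) (c : R)
    (C : {ffun {ffun 'I_m -> T} -> R}) : R :=
  \sum_(x : {ffun 'I_m -> T}) powR (C x) c.

(* Main.v *)
Require Import Defs.
From HB Require Import structures.
From mathcomp Require Import all_boot all_order all_algebra.
From mathcomp Require Import reals exp.
From mathcomp Require Import ring lra.
Set Implicit Arguments. Unset Strict Implicit.
Import Order.TTheory GRing.Theory Num.Theory.
Local Open Scope ring_scope.

Lemma amgm (R : realType) (c s : R) : 0 < c < 1 -> 0 <= s ->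
  powR s c <= 1 - c + c * s.
Proof.
move=> /andP[c0 c1] s0.
have q0 : 0 < 1 - c by rewrite subr_gt0.
have := @conjugate_powR R (powR s c) 1 (c^-1) ((1 - c)^-1) (powR_ge0 _ _) ler01.
rewrite !invr_gt0 !invrK c0 q0 addrC subrK => /(_ isT isT erefl).
rewrite mulr1 -powRrM mulfV ?gt_eqF // powRr1 // powR1 ?invrK.
lra.
Qed.

Lemma phi_dec (R : realType) (c v g : R) : 0 < c < 1 -> 0 < v -> v <= g ->
  powR g c / g <= powR v c / v.
Proof.
move=> c01 v0 vg.
have g0 : 0 < g by apply: lt_le_trans vg.
set s := g / v.
have s1 : 1 <= s by rewrite /s ler_pdivlMr // mul1r.
have gE : g = v * s by rewrite /s mulrCA divff ?gt_eqF // mulr1.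
have s0 : 0 < s by apply: lt_le_trans s1.
rewrite gE (powRM _ (ltW v0) (ltW s0)).
have hs : powR s c <= s.
  apply: ler1_powR => //; case/andP: c01 => _ /ltW //.
rewrite invfM mulrACA. apply: ler_piMr; first by rewrite divr_ge0 ?powR_ge0 ?ltW.
by rewrite ler_pdivrMr // mul1r.
Qed.

Lemma concave_tan (R : realType) (c v w : R) : 0 < c < 1 -> 0 <= w -> w <= v -> 0 < v ->
  c * (v - w) * (powR v c / v) <= powR v c - powR w c.
Proof.
move=> c01 w0 wv v0.
set t := w / v.
have wE : w = v * t by rewrite /t mulrCA divff ?gt_eqF // mulr1.
have t0 : 0 <= t by rewrite /t divr_ge0 // ltW.
have := @amgm R c t c01 t0.
rewrite wE (powRM _ (ltW v0) t0) => h.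
have pv : 0 <= powR v c by apply: powR_ge0.
have -> : c * (v - v * t) * (powR v c / v) = powR v c * (c - c * t).
  by field; rewrite gt_eqF.
nra.
Qed.

Definition phi (R : realType) (c y : R) := powR y c / y.
Definition Bf (R : realType) (a u : R) :=
  Num.min u (a / 2) + (if a <= u then a / 2 else 0).
Definition Hf (R : realType) (c a y : R) :=
  powR (Num.min y (a / 2)) c / c + (if a <= y then powR a c / 2 else 0).

Lemma phi_ge0 (R : realType) (c y : R) : 0 <= y -> 0 <= phi c y.
Proof. by move=> y0; rewrite /phi divr_ge0 // powR_ge0. Qed.

Lemma Bf_ge0 (R : realType) (a u : R) : 0 <= a -> 0 <= u -> 0 <= Bf a u.
Proof.
move=> a0 u0; rewrite /Bf; case: (leP u (a/2)) => h1; case: (leP a u) => h2; lra.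
Qed.

Lemma Bf_small (R : realType) (a u : R) : 0 <= a -> a <= u -> Bf a u = a.
Proof.
move=> a0 au; rewrite /Bf au; case: (leP u (a/2)) => h; lra.
Qed.

Lemma Bf_big (R : realType) (a u : R) : u < a -> Bf a u = Num.min u (a / 2).
Proof. by move=> ua; rewrite /Bf leNgt ua addr0. Qed.

Lemma Bf_min (R : realType) (a u : R) : 0 <= a -> 0 <= u ->
  Num.min a (u / 2) <= Bf a u.
Proof.
move=> a0 u0; rewrite /Bf; case: (leP a u) => h1; case: (leP u (a/2)) => h2;
  case: (leP a (u/2)) => h3; lra.
Qed.

Lemma Bf0 (R : realType) (a : R) : 0 <= a -> Bf a 0 = 0.
Proof. move=> a0; rewrite /Bf; case: (leP (0:R) (a/2)) => h1; case: (leP a 0) => h2; lra. Qed.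

Lemma Hf0 (R : realType) (c a : R) : 0 < c -> 0 <= a -> Hf c a 0 = 0.
Proof.
move=> c0 a0; rewrite /Hf; case: (leP a 0) => h1.
  have -> : a = 0 by lra.
  by rewrite mul0r minxx powR0 ?gt_eqF // !mul0r addr0.
have -> : Num.min (0:R) (a/2) = 0 by case: (leP (0:R) (a/2)) => h; lra.
by rewrite powR0 ?gt_eqF // mul0r addr0.
Qed.

Lemma interval_ineq (R : realType) (c a g g' : R) : 0 < c < 1 -> 0 <= a ->
  0 <= g' -> g' <= g -> 0 < g ->
  (Bf a g - Bf a g') * phi c g <= Hf c a g - Hf c a g'.
Proof.
move=> c01 a0 g'0 gg' g0.
have cc : 0 < c by case/andP: c01.
have ph0 := phi_ge0 c (ltW g0).
rewrite /Bf /Hf.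
set v := Num.min g (a / 2); set w := Num.min g' (a / 2).
have w0 : 0 <= w by rewrite /w; case: (leP g' (a/2)) => h1; lra.
have wv : w <= v.
  rewrite /v /w; case: (leP g (a/2)) => h1; case: (leP g' (a/2)) => h2; lra.
have vg : v <= g by rewrite /v; case: (leP g (a/2)) => h1; lra.
have D : (v - w) * phi c g <= powR v c / c - powR w c / c.
  have [v0|v0] := eqVneq v 0.
    have w00 : w = 0 by apply/le_anti; rewrite w0 -v0 wv.
    by rewrite v0 w00 !subrr mul0r lexx.
  have vp : 0 < v by rewrite lt_def v0 (le_trans w0 wv).
  have h1 := phi_dec c01 vp vg.
  have h2 := concave_tan c01 w0 wv vp.
  rewrite -mulrBl ler_pdivlMr //.
  apply: le_trans h2.
  rewrite /phi; have : c * (v - w) * (powR g c / g) <= c * (v - w) * (powR v c / v) by apply: ler_wpM2l => //; nra.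
  lra.
have J : ((if a <= g then a / 2 else 0) - (if a <= g' then a / 2 else 0)) * phi c g
   <= (if a <= g then powR a c / 2 else 0) - (if a <= g' then powR a c / 2 else 0).
  case: (leP a g') => h1.
    by rewrite (le_trans h1 gg') !subrr mul0r.
  case: (leP a g) => h2; last by rewrite !subrr mul0r.
  rewrite !subr0.
  have ap : 0 < a by lra.
  have := phi_dec c01 ap h2; rewrite /phi => h.
  have -> : powR a c / 2 = a / 2 * (powR a c / a) by field; rewrite gt_eqF.
  by apply: ler_wpM2l => //; lra.
lra.
Qed.

Lemma Hf_le (R : realType) (c a y : R) : 0 < c < 1 -> 0 <= a -> 0 <= y ->
  Hf c a y <= (2^-1 + (c * powR 2 c)^-1) * powR a c.
Proof.
move=> c01 a0 y0.
have c0 : 0 < c by case/andP: c01.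
set X := powR 2 c; set A := powR a c.
have Xp : 0 < X by rewrite /X powR_gt0.
have A0 : 0 <= A by rewrite /A powR_ge0.
have h2 : X * powR (2^-1) c = 1.
  by rewrite /X -powRM ?invr_ge0 // divff ?pnatr_eq0 // powR1.
have PE : powR (2^-1) c = X^-1.
  by apply: (mulfI (lt0r_neq0 Xp)); rewrite h2 divff // lt0r_neq0.
have hm : powR (Num.min y (a / 2)) c <= A * X^-1.
  rewrite /A -PE -powRM ?invr_ge0 //.
  apply: ge0_ler_powR; first exact: ltW.
  - by rewrite nnegrE; case: (leP y (a/2)) => h; lra.
  - by rewrite nnegrE; lra.
  - by case: (leP y (a/2)) => h; lra.
have hm' : powR (Num.min y (a / 2)) c / c <= A * X^-1 / c.
  by apply: ler_wpM2r => //; rewrite invr_ge0 ltW.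
rewrite /Hf invfM -/X -/A.
have hi : (if a <= y then A / 2 else 0) <= A / 2 by case: ifP => _; lra.
lra.
Qed.

Lemma maxstate_ge0 (R : realType) (T : finType) m (q : 'I_m -> T -> R) k :
  0 <= maxstate q k.
Proof. exact: bigmax_ge_id. Qed.

Lemma le_maxstate (R : realType) (T : finType) m (q : 'I_m -> T -> R) k t :
  q k t <= maxstate q k.
Proof. exact: le_bigmax. Qed.

Lemma maxstate_le (R : realType) (T : finType) m (q : 'I_m -> T -> R) k x :
  0 <= x -> (forall t, q k t <= x) -> maxstate q k <= x.
Proof. by move=> x0 h; apply: bigmax_le. Qed.

Lemma greedy_r_le (R : realType) (T : finType) m (q : 'I_m -> T -> R) k :
  greedy_r q <= maxstate q k.
Proof. exact: bigmin_le. Qed.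

Lemma greedy_r_ge0 (R : realType) (T : finType) m (q : 'I_m -> T -> R) :
  0 <= greedy_r q.
Proof.
apply: le_bigmin; first exact: bigmax_ge_id.
by move=> k _; apply: maxstate_ge0.
Qed.

Lemma greedy_r_arg (R : realType) (T : finType) m (q : 'I_m -> T -> R) (k : 'I_m) :
  exists k0, greedy_r q = maxstate q k0.
Proof.
rewrite /greedy_r.
have [i0 _ ->] := eq_bigmin (x := \big[Num.max/0]_(k : 'I_m) maxstate q k)
  k xpredT (fun k => maxstate q k) isT
  (fun i _ => le_bigmax _ _ i).
by exists i0.
Qed.

Lemma greedy_r_empty (R : realType) (T : finType) m (q : 'I_m -> T -> R) :
  (forall k : 'I_m, False) -> greedy_r q = 0.
Proof.
case: m q => [|m'] q H; first by rewrite /greedy_r !big_ord0.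
by case: (H ord0).
Qed.

Lemma greedy_r_pos_ex (R : realType) (T : finType) m (q : 'I_m -> T -> R) :
  greedy_r q != 0 -> exists k : 'I_m, True.
Proof.
move=> h; case: (pickP (fun _ : 'I_m => true)) => [k _|none]; first by exists k.
by rewrite greedy_r_empty ?eqxx in h => // k; move: (none k).
Qed.

Definition Inv (R : realType) (T : finType) m (p : 'I_m -> {ffun T -> R})
    (q : 'I_m -> T -> R) : Prop :=
  [/\ forall k t, 0 <= q k t <= p k t,
      forall k t, q k t != p k t -> greedy_r q <= p k t - q k t &
      forall k k', \sum_t q k t = \sum_t q k' t].

Lemma sum_update (R : realType) (T : finType) (f : T -> R) j0 r :
  \sum_t (if t == j0 then f t - r else f t) = \sum_t f t - r.
Proof.
rewrite (bigD1 j0) //= eqxx [in RHS](bigD1 j0) //=.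
rewrite (eq_bigr f); last by move=> i /negbTE ->.
by rewrite addrAC.
Qed.

Lemma r_mono (R : realType) (T : finType) m (q : 'I_m -> T -> R) j (k : 'I_m) :
  greedy_r (greedy_update q j (greedy_r q)) <= greedy_r q.
Proof.
have [k0 ->] := greedy_r_arg q k.
apply: le_trans (greedy_r_le _ k0) _.
apply: le_bigmax2 => t _; rewrite /greedy_update.
case: ifP => _ //; have := maxstate_ge0 q k0; lra.
Qed.

Lemma inv_step (R : realType) (T : finType) m (p : 'I_m -> {ffun T -> R})
    (q : 'I_m -> T -> R) j :
  Inv p q -> (forall k t, q k t <= q k (j k)) ->
  Inv p (greedy_update q j (greedy_r q)).
Proof.
case=> h1 h2 h3 hj.
have r0 := greedy_r_ge0 q.
have h1a : forall k t, 0 <= q k t by move=> k t; case/andP: (h1 k t).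
have h1b : forall k t, q k t <= p k t by move=> k t; case/andP: (h1 k t).
have rle : forall k, greedy_r q <= q k (j k).
  move=> k; apply: le_trans (greedy_r_le q k) _.
  by apply: maxstate_le.
split.
- move=> k t; rewrite /greedy_update; case: ifP => [/eqP ->|_].
    have := rle k; have := h1a k (j k); have := h1b k (j k).
    move=> a b c; apply/andP; split; lra.
  by apply/andP; split.
- move=> k t; have rm := r_mono q j k.
  rewrite /greedy_update; case: ifP => [/eqP -> _|_ hne].
    have := h1a k (j k); have := h1b k (j k); lra.
  have := h2 k t hne; lra.
- move=> k k'; rewrite /greedy_update !sum_update.
  by rewrite (h3 k k').
Qed.

Lemma tot (R : realType) (T : finType) m (p : 'I_m -> {ffun T -> R})
    (q : 'I_m -> T -> R) G :
  greedy_run q G -> Inv p q -> forall k, \sum_t q k t = \sum_(y <- G) y.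
Proof.
elim=> {q G} [q hr | q j G hr hj hrun IH] hinv k.
  have [k0 hk0] := greedy_r_arg q k.
  case: hinv => h1 _ h3.
  rewrite big_nil (h3 k k0) big1 // => t _.
  apply/le_anti; case/andP: (h1 k0 t) => -> _; rewrite andbT.
  by rewrite -hr hk0 le_maxstate.
rewrite big_cons -(IH (inv_step hinv hj) k).
by rewrite /greedy_update sum_update addrC subrK.
Qed.

Lemma minsum (R : realType) (I : finType) (Pr : pred I) (a : I -> R) (w : R) :
  0 <= w -> (forall x, 0 <= a x) ->
  Num.min (\sum_(x | Pr x) a x) w <= \sum_(x | Pr x) Num.min (a x) w.
Proof.
move=> w0 a0.
suff : 0 <= \sum_(x | Pr x) a x /\
   Num.min (\sum_(x | Pr x) a x) w <= \sum_(x | Pr x) Num.min (a x) w by case.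
apply: (big_ind2 (fun s1 s2 => 0 <= s1 /\ Num.min s1 w <= s2)).
- by split => //; case: (leP (0:R) w) => h; lra.
- move=> x1 x2 y1 y2 [hx1 hx2] [hy1 hy2]; split; first lra.
  move: hx2 hy2.
  case: (leP x1 w) => h1; case: (leP y1 w) => h2; case: (leP (x1 + y1) w) => h3;
    lra.
- by move=> i _; split.
Qed.


Lemma perstate_arith (R : realType) (u v a0 S B : R) :
  0 < u -> 0 <= v -> v <= u -> u < a0 -> 0 <= S ->
  v <= a0 + S -> (v != a0 + S -> u <= a0 + S - v) ->
  Num.min S (u / 2) <= B -> v <= Num.min u (a0 / 2) + B.
Proof.
move=> u0 v0 vu ua S0 vP hne hB.
have hne' : v != a0 + S by apply/negP => /eqP hv; lra.
have := hne hne' => h.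
move: hB; case: (leP u (a0 / 2)) => h1; case: (leP S (u / 2)) => h2 hB; lra.
Qed.

Lemma perstate (R : realType) (I : finType) (Pr : pred I) (a : I -> R) (u v : R) :
  0 < u -> (forall x, 0 <= a x) -> 0 <= v -> v <= \sum_(x | Pr x) a x -> v <= u ->
  (v != \sum_(x | Pr x) a x -> u <= \sum_(x | Pr x) a x - v) ->
  v <= \sum_(x | Pr x) Bf (a x) u.
Proof.
move=> u0 a0 v0 vP vu hne.
case: (boolP [exists x, Pr x && (u < a x)]).
  case/existsP => x0 /andP [Px0 ux0].
  have E1 : \sum_(x | Pr x) a x = a x0 + \sum_(i | Pr i && (i != x0)) a i.
    by rewrite (bigD1 x0).
  have E2 : \sum_(x | Pr x) Bf (a x) u =
      Bf (a x0) u + \sum_(i | Pr i && (i != x0)) Bf (a i) u.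
    by rewrite (bigD1 x0).
  move: vP hne; rewrite E1 E2 Bf_big //.
  have S0 : 0 <= \sum_(i | Pr i && (i != x0)) a i by apply: sumr_ge0.
  have hrest : Num.min (\sum_(i | Pr i && (i != x0)) a i) (u / 2)
      <= \sum_(i | Pr i && (i != x0)) Bf (a i) u.
    apply: le_trans (minsum _ _ _) _; first lra; first by [].
    by apply: ler_sum => i _; apply: Bf_min => //; lra.
  move=> vP hne.
  exact: perstate_arith u0 v0 vu ux0 S0 vP hne hrest.
rewrite negb_exists => /forallP H.
apply: (le_trans vP); rewrite le_eqVlt; apply/orP; left; apply/eqP.
apply: eq_bigr => x Px; rewrite Bf_small //.
by move: (H x); rewrite Px /= -leNgt.
Qed.

Lemma keyL (R : realType) (T : finType) m (p : 'I_m -> {ffun T -> R})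
    (C : {ffun {ffun 'I_m -> T} -> R}) (q : 'I_m -> T -> R) G :
  is_coupling p C -> greedy_run q G -> Inv p q ->
  \sum_(y <- G) y <= \sum_x Bf (C x) (greedy_r q).
Proof.
move=> [C0 hC] hrun hinv.
have r0 := greedy_r_ge0 q.
have htot := tot hrun.
move: hinv htot r0; case: hrun => [q' hr | q' j G' hr hj hrun'] hinv htot r0.
  by rewrite big_nil; apply: sumr_ge0 => x _; apply: Bf_ge0.
have [k _] := greedy_r_pos_ex hr.
have [k0 hk0] := greedy_r_arg q' k.
have rp : 0 < greedy_r q' by rewrite lt_def hr greedy_r_ge0.
rewrite -(htot p hinv k0).
rewrite (partition_big (fun x : {ffun 'I_m -> T} => x k0) xpredT) //=.
apply: ler_sum => t _.
case: hinv => h1 h2 h3.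
have [ha hb] : 0 <= q' k0 t /\ q' k0 t <= p k0 t by apply/andP.
rewrite -hC in hb.
apply: perstate => //.
- by rewrite hk0 le_maxstate.
- move=> hne; have h2' := h2 k0 t; rewrite -hC in h2'.
  exact: h2' hne.
Qed.

Lemma main (R : realType) (T : finType) m (p : 'I_m -> {ffun T -> R})
    (C : {ffun {ffun 'I_m -> T} -> R}) (c : R) (q : 'I_m -> T -> R) G :
  0 < c < 1 -> is_coupling p C -> greedy_run q G -> Inv p q ->
  Fcost_seq c G + (\sum_x Bf (C x) (greedy_r q) - \sum_(y <- G) y) * phi c (greedy_r q)
    <= \sum_x Hf c (C x) (greedy_r q).
Proof.
move=> c01 hC; have [C0 _] := hC.
have cc : 0 < c by case/andP: c01.
elim=> {q G} [q hr | q j G hr hj hrun IH] hinv.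
  have hB0 : \sum_x Bf (C x) 0 = 0 by apply: big1 => x _; apply: Bf0.
  have hH0 : \sum_x Hf c (C x) 0 = 0 by apply: big1 => x _; apply: Hf0.
  by rewrite hr /Fcost_seq !big_nil hB0 hH0 subrr mul0r addr0.
set r := greedy_r q.
set q' := greedy_update q j r.
have hinv' : Inv p q' by apply: inv_step.
have IH' := IH hinv'.
set r' := greedy_r q' in IH'.
have [k _] := greedy_r_pos_ex hr.
have rp : 0 < r by rewrite lt_def hr greedy_r_ge0.
have r'0 : 0 <= r' by apply: greedy_r_ge0.
have rr' : r' <= r by apply: r_mono k.
have hK : \sum_(y <- G) y <= \sum_x Bf (C x) r' by apply: keyL hC hrun hinv'.
have hI : (\sum_x Bf (C x) r - \sum_x Bf (C x) r') * phi c r <=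
          \sum_x Hf c (C x) r - \sum_x Hf c (C x) r'.
  rewrite -!sumrB mulr_suml; apply: ler_sum => x _.
  by apply: interval_ineq.
have h3 : (\sum_x Bf (C x) r' - \sum_(y <- G) y) * (phi c r - phi c r') <= 0.
  have [r'e|r'p] := eqVneq r' 0.
    have hS : 0 <= \sum_(y <- G) y by rewrite -(tot hrun hinv' k); apply: sumr_ge0 => t _; case: hinv' => h1 _ _; case/andP: (h1 k t).
    have hB : \sum_x Bf (C x) r' = 0 by rewrite r'e; apply: big1 => x _; apply: Bf0.
    have -> : \sum_x Bf (C x) r' - \sum_(y <- G) y = 0 by rewrite hB in hK *; lra.
    by rewrite mul0r.
  have r'pos : 0 < r' by rewrite lt_def r'p r'0.
  have := phi_dec c01 r'pos rr'; rewrite -/(phi c r) -/(phi c r') => hph.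
  rewrite mulr_ge0_le0 //; lra.
have hrc : powR r c = r * phi c r by rewrite /phi mulrC divfK // gt_eqF.
rewrite /Fcost_seq big_cons big_cons -/(Fcost_seq c G) hrc.
move: IH' hI h3 hK.
set X := Fcost_seq c G; set A := \sum_x Bf (C x) r; set A' := \sum_x Bf (C x) r'.
set S := \sum_(y <- G) y; set h := phi c r; set h' := phi c r'.
set H := \sum_x Hf c (C x) r; set H' := \sum_x Hf c (C x) r'.
move=> *; nra.
Qed.

Unset Implicit Arguments.
Set Strict Implicit.

Theorem theorem6 (R : realType) (c : R) (T : finType) (m : nat)
    (p : 'I_m -> {ffun T -> R}) :
  0 < c < 1 ->
  (forall k, is_distr (p k)) ->
  forall G : seq R, greedy_run (fun k t => p k t) G ->
  forall C : {ffun {ffun 'I_m -> T} -> R}, is_coupling p C ->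
  Fcost_seq c G <= (2^-1 + (c * powR 2 c)^-1) * Fcost_coupling c C.
Proof.
move=> c01 hp G hrun C hC.
have hinv : Inv p (fun k t => p k t).
  split.
  - by move=> k t; case: (hp k) => h _; rewrite h lexx.
  - by move=> k t; rewrite eqxx.
  - by move=> k k'; case: (hp k) => _ ->; case: (hp k') => _ ->.
have hM := main c01 hC hrun hinv.
have hK := keyL hC hrun hinv.
have r0 := greedy_r_ge0 (fun k t => p k t).
have hph := phi_ge0 c r0.
have hH : \sum_x Hf c (C x) (greedy_r (fun k t => p k t)) <=
    (2^-1 + (c * powR 2 c)^-1) * Fcost_coupling c C.
  rewrite /Fcost_coupling mulr_sumr; apply: ler_sum => x _.
  apply: Hf_le => //; by case: hC.
have hpos : 0 <= (\sum_x Bf (C x) (greedy_r (fun k t => p k t)) - \sum_(y <- G) y) *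
   phi c (greedy_r (fun k t => p k t)).
  by apply: mulr_ge0 => //; lra.
lra.
Qed.
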